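(* Let $X$ be a connected bipartite graph with a unique perfect matching. Then for any assignment of nonzero real weights to the edges of $X$, no vertex of the resulting weighted graph is sedentary.
   Context: For a weighted graph with weighted adjacency matrix $A$ (entries equal to edge weights, $0$ for non-adjacent pairs), the transition matrix is $U(t)=e^{itA}$. A vertex $u$ is sedentary if $\inf_{t>0}|U(t)_{u,u}|\ge C$ for some constant $0<C\le1$, and not sedentary if $\inf_{t>0}|U(t)_{u,u}|=0$. *)

(* Defs.v *)
From HB Require Import structures.
From mathcomp Require Import all_boot all_order all_algebra.
From mathcomp Require Import Rstruct.
From Stdlib Require Import Reals.
From Coquelicot Require Import Coquelicot.

Set Implicit Arguments.
Unset Strict Implicit.
Unset Printing Implicit Defensive.

Definition simple_graph (n : nat) (e : rel 'I_n) : Prop :=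
  symmetric e /\ irreflexive e.

Definition connected_graph (n : nat) (e : rel 'I_n) : Prop :=
  forall x y : 'I_n, connect e x y.

Definition bipartite (n : nat) (e : rel 'I_n) : Prop :=
  exists c : 'I_n -> bool, forall x y, e x y -> c x != c y.

Definition perfect_matching (n : nat) (e : rel 'I_n) (M : {set {set 'I_n}}) : Prop :=
  (forall S, S \in M -> exists x y, e x y /\ S = [set x; y]) /\
  (forall v : 'I_n, #|[set S in M | v \in S]| = 1%nat).

Definition unique_perfect_matching (n : nat) (e : rel 'I_n) : Prop :=
  exists M, perfect_matching e M /\ forall M', perfect_matching e M' -> M' = M.

Definition wadj (n : nat) (e : rel 'I_n) (w : 'I_n -> 'I_n -> R) : 'M[R]_n :=
  \matrix_(x, y) (if e x y then w x y else R0).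

Definition expitA_term (n : nat) (A : 'M[R]_n) (t : R) (x y : 'I_n) (k : nat) : C :=
  Cmult (pow_n (Cmult Ci (RtoC t)) k)
        (RtoC (Rdiv (GRing.exp A k x y) (INR (Factorial.fact k)))).

(* Transition matrix U(t) = e^{itA}, entry (x,y): sum of the (absolutely
   convergent) complex exponential series, taken componentwise. *)
Definition transition (n : nat) (A : 'M[R]_n) (t : R) (x y : 'I_n) : C :=
  (Series (fun k => Re (expitA_term A t x y k)),
   Series (fun k => Im (expitA_term A t x y k))).

Definition not_sedentary (n : nat) (A : 'M[R]_n) (u : 'I_n) : Prop :=
  Glb_Rbar (fun r => exists t : R, Rlt R0 t /\ r = Cmod (transition A t u u))
  = Finite R0.

(* Main.v *)
Require Import Defs.
From HB Require Import structures.
From mathcomp Require Import all_boot all_order all_algebra.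
From mathcomp Require Import Rstruct.
From mathcomp Require complex.
From mathcomp Require Import zify.
From mathcomp Require Import perm.
From Stdlib Require Import Reals Lra Lia Classical.
From Coquelicot Require Import Coquelicot.

Import Order.TTheory GRing.Theory Num.Theory.
Open Scope R_scope.


Definition cc (k : nat) : R :=
  if odd k then 0 else (-1) ^ (k./2) / INR (Factorial.fact k).

Lemma cc_even k : cc (2 * k)%coq_nat = cos_n k.
Proof.
rewrite /cc /cos_n.
have -> : odd (2 * k)%coq_nat = false by rewrite (_ : (2 * k)%coq_nat = k.*2) ?odd_double // -mul2n.
have -> : ((2 * k)%coq_nat)./2 = k by rewrite (_ : (2 * k)%coq_nat = k.*2) ?doubleK // -mul2n.
by [].
Qed.

Lemma cc_odd k : cc ((2 * k)%coq_nat + 1)%coq_nat = 0.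
Proof.
rewrite /cc.
have -> : ((2 * k)%coq_nat + 1)%coq_nat = (k.*2).+1 by rewrite -mul2n; lia.
rewrite /= odd_double.
by [].
Qed.

Lemma is_series_zero : is_series (fun _ : nat => 0) 0.
Proof.
have H : Rabs (1/2) < 1 by rewrite Rabs_pos_eq; lra.
have := @is_series_scal R_AbsRing R_NormedModule 0 _ _ (is_series_geom (1/2) H).
rewrite /scal /= /mult /= Rmult_0_l.
apply: is_series_ext => n; by rewrite Rmult_0_l.
Qed.

Lemma cos_series x : is_series (fun k => cc k * x ^ k) (cos x).
Proof.
have H1 : is_pseries (fun n => cc (2 * n)%coq_nat) (x ^ 2) (cos x).
  rewrite /cos; case: (exist_cos (Rsqr x)) => l Hl.
  rewrite /is_pseries.
  apply: (is_series_ext (fun i => cos_n i * (Rsqr x) ^ i)).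
    move=> i; rewrite cc_even /scal /= /mult /= pow_n_pow /Rsqr.
    rewrite Rmult_comm; congr (_ * _); congr (_ ^ _); ring.
  by apply/is_series_Reals.
have H2 : is_pseries (fun n => cc ((2 * n)%coq_nat + 1)%coq_nat) (x ^ 2) 0.
  rewrite /is_pseries.
  apply: (is_series_ext (fun _ => 0)).
    by move=> i; rewrite cc_odd /scal /= /mult /=; ring.
  exact: is_series_zero.
have := is_pseries_odd_even cc x (cos x) 0 H1 H2.
rewrite /is_pseries.
have -> : cos x + x * 0 = cos x by ring.
apply: is_series_ext => k.
by rewrite /scal /= /mult /= pow_n_pow Rmult_comm.
Qed.


Section RS.
Local Open Scope ring_scope.
Definition rsum (I : Type) (s : seq I) (F : I -> R) : R := \sum_(i <- s) F i.
Arguments rsum {I}.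

Lemma rsum_le {I : Type} s (F G : I -> R) : (forall i, Rle (F i) (G i)) -> Rle (rsum s F) (rsum s G).
Proof. move=> H; apply/RleP; rewrite /rsum; apply: ler_sum => i _; exact/RleP. Qed.

Lemma rsum_ge0 {I : Type} s (F : I -> R) : (forall i, Rle 0 (F i)) -> Rle 0 (rsum s F).
Proof. move=> H; apply/RleP; rewrite /rsum; apply: sumr_ge0 => i _; exact/RleP. Qed.

Lemma rsumB {I : Type} s (F G : I -> R) : rsum s (fun i => Rminus (F i) (G i)) = Rminus (rsum s F) (rsum s G).
Proof. exact: sumrB. Qed.

Lemma rsumD {I : Type} s (F G : I -> R) : rsum s (fun i => Rplus (F i) (G i)) = Rplus (rsum s F) (rsum s G).
Proof. exact: big_split. Qed.

Lemma rsumMr {I : Type} s (F : I -> R) a : rsum s (fun i => Rmult (F i) a) = Rmult (rsum s F) a.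
Proof. by rewrite /rsum RmultE mulr_suml. Qed.

Lemma rsum_ext {I : Type} s (F G : I -> R) : (forall i, F i = G i) -> rsum s F = rsum s G.
Proof. by move=> H; rewrite /rsum; apply: eq_bigr => i _; rewrite H. Qed.

Lemma rsum0 {I : Type} s : rsum s (fun _ : I => 0%R) = 0%R.
Proof. by rewrite /rsum big1. Qed.

Lemma rsum_ge_term m (H : 'I_m -> R) j0 : (forall j, Rle 0 (H j)) ->
  Rle (H j0) (rsum (index_enum 'I_m) H).
Proof.
move=> H0; apply/RleP; rewrite /rsum (bigD1 j0) //= lerDl.
apply: sumr_ge0 => j _; exact/RleP.
Qed.
End RS.
Arguments rsum {I}.

Lemma is_derive_sum (I : Type) (s : seq I) (F : I -> R -> R) (dF : I -> R) t :
  (forall i, is_derive (F i) t (dF i)) ->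
  is_derive (fun x => rsum s (fun i => F i x)) t (rsum s dF).
Proof.
move=> H; elim: s => [|a s IH].
  apply: (is_derive_ext (fun _ => 0)).
    by move=> x; rewrite /rsum big_nil.
  rewrite /rsum big_nil; exact: is_derive_const.
apply: (is_derive_ext (fun x => F a x + rsum s (fun i => F i x))).
  by move=> x; rewrite /rsum big_cons.
rewrite /rsum big_cons; exact: is_derive_plus.
Qed.

Arguments is_derive_sum {I}.

Definition Sfun (b t : R) : R := if Req_EM_T b 0 then t else sin (b * t) / b.

Lemma S_derive b t : is_derive (Sfun b) t (cos (b * t)).
Proof.
rewrite /Sfun; case: Req_EM_T => Hb.
  subst b; rewrite Rmult_0_l cos_0; exact: is_derive_id.
evar (d : R).
have H : is_derive (fun x => sin (b * x) / b) t d.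
  auto_derive; first by [].
  rewrite /d; reflexivity.
have -> : cos (b * t) = d by rewrite /d; field.
exact H.
Qed.

Lemma S0 b : Sfun b 0 = 0.
Proof. rewrite /Sfun; case: Req_EM_T => H //; rewrite Rmult_0_r sin_0 /Rdiv Rmult_0_l; reflexivity. Qed.

Lemma S_bound b t : b <> 0 -> Rabs (Sfun b t) <= / Rabs b.
Proof.
move=> Hb; rewrite /Sfun; case: Req_EM_T => H0 //.
rewrite /Rdiv Rabs_mult Rabs_inv.
have := Rabs_pos_lt b Hb => Hp.
have := SIN_bound (b * t) => Hs.
have : Rabs (sin (b * t)) <= 1 by apply Rabs_le; lra.
move=> Ha.
have Hi : 0 < / Rabs b by apply Rinv_0_lt_compat.
nra.
Qed.

Definition Nb (b : R) : R := if Req_EM_T b 0 then 0 else / Rabs b.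

Lemma Nb_ge0 b : 0 <= Nb b.
Proof.
rewrite /Nb; case: Req_EM_T => H /=; first lra.
apply: Rlt_le; apply: Rinv_0_lt_compat; exact: Rabs_pos_lt.
Qed.

Lemma Nb0 : Nb 0 = 0.
Proof. by rewrite /Nb; case: Req_EM_T => H /=. Qed.

Lemma S_lower b t : 0 <= t -> - Nb b <= Sfun b t.
Proof.
move=> Ht; rewrite /Nb; case: Req_EM_T => H /=.
  subst b; rewrite /Sfun; case: Req_EM_T => H' /=; lra.
have := S_bound b t H; move/Rabs_le_between; lra.
Qed.

Lemma S_upper b t : b <> 0 -> Sfun b t <= / Rabs b.
Proof. by move=> H; have := S_bound b t H; move/Rabs_le_between => [_ ?]. Qed.

Lemma S_zero t : Sfun 0 t = t.
Proof. by rewrite /Sfun; case: Req_EM_T => H /=. Qed.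

Lemma cont_of_derive {f df : R -> R} : (forall t, is_derive f t (df t)) -> continuity f.
Proof.
move=> H t; apply/continuity_pt_filterlim.
apply: ex_derive_continuous; eexists; exact: H.
Qed.

Lemma zero_exists m (c lam : 'I_m -> R) :
  (forall j, 0 <= c j) -> (forall j, lam j <> 0) -> rsum (index_enum 'I_m) c = 1 ->
  exists t, 0 < t /\ rsum (index_enum 'I_m) (fun j => c j * cos (lam j * t)) = 0.
Proof.
move=> c0 lam0 c1.
set E := index_enum 'I_m.
have c1' : rsum E c = 1 := c1.
set f := fun t => rsum E (fun j => c j * cos (lam j * t)).
have f0 : f 0 = 1.
  rewrite /f -c1; apply: rsum_ext => j; rewrite Rmult_0_r cos_0; ring.
have fd : forall t, is_derive f t (rsum E (fun j => c j * (- sin (lam j * t) * lam j))).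
  move=> t; rewrite /f; apply: (is_derive_sum E (fun j x => c j * cos (lam j * x))) => j.
  auto_derive; first by [].
  ring.
have fc := cont_of_derive fd.
case: (classic (exists t, 0 <= t /\ f t < 0)) => [[t [t0 ft]] | Hn].
  have [z [[z0 zt] fz]] := IVT_cor f 0 t fc t0 (ltac:(rewrite f0; lra)).
  exists z; split => //.
  case: z0 => // z0; subst z; rewrite f0 in fz; lra.
have Hpos : forall t, 0 <= t -> 0 <= f t.
  move=> t t0; apply: Rnot_lt_le => ft; apply: Hn; by exists t.
have [j0 cj0] : exists j0, 0 < c j0.
  apply: NNPP => Hno.
  have : rsum E c = 0.
    rewrite -(rsum0 E); apply: rsum_ext => j.
    have := c0 j; case => // Hlt; exfalso; apply: Hno; by exists j.
  lra.
set mu := lam j0.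
set K := fun j => / Rabs (lam j) + Nb (lam j - mu) / 2 + Nb (lam j + mu) / 2.
set g := fun j t => Sfun (lam j) t - Sfun (lam j - mu) t / 2 - Sfun (lam j + mu) t / 2.
set G := fun t => rsum E (fun j => c j * g j t).
have K0 : forall j, 0 <= K j.
  move=> j; rewrite /K.
  have := Nb_ge0 (lam j - mu); have := Nb_ge0 (lam j + mu).
  have : 0 < / Rabs (lam j) by apply: Rinv_0_lt_compat; exact: Rabs_pos_lt.
  lra.
have gK : forall j t, 0 <= t -> g j t <= K j.
  move=> j t t0; rewrite /g /K.
  have := S_upper (lam j) t (lam0 j); have := S_lower (lam j - mu) t t0; have := S_lower (lam j + mu) t t0.
  lra.
have gK0 : forall t, 0 <= t -> g j0 t <= K j0 - t / 2.
  move=> t t0; rewrite /g /K.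
  have -> : lam j0 - mu = 0 by rewrite /mu; ring.
  rewrite S_zero Nb0.
  have := S_upper (lam j0) t (lam0 j0); have := S_lower (lam j0 + mu) t t0.
  lra.
have Gb : forall t, 0 <= t -> G t <= rsum E (fun j => c j * K j) - c j0 * t / 2.
  move=> t t0.
  have := @rsum_ge_term m (fun j => c j * K j - c j * g j t) j0.
  rewrite rsumB -/(G t).
  have := gK0 t t0 => H1.
  have : c j0 * g j0 t <= c j0 * (K j0 - t / 2) by apply: Rmult_le_compat_l; lra.
  move=> H2 H3.
  have : c j0 * t / 2 <= c j0 * K j0 - c j0 * g j0 t by lra.
  move=> H4.
  suff : c j0 * t / 2 <= rsum E (fun j => c j * K j) - G t by lra.
  apply: (Rle_trans _ _ _ H4); apply: H3 => j.
  have := gK j t t0; have := c0 j; nra.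
have Gd : forall t, is_derive G t (f t * (1 - cos (mu * t))).
  move=> t.
  have -> : f t * (1 - cos (mu * t)) =
     rsum E (fun j => c j * (cos (lam j * t) - cos ((lam j - mu) * t) / 2 - cos ((lam j + mu) * t) / 2)).
    rewrite /f -rsumMr; apply: rsum_ext => j.
    have -> : (lam j - mu) * t = lam j * t - mu * t by ring.
    have -> : (lam j + mu) * t = lam j * t + mu * t by ring.
    rewrite cos_minus cos_plus; field.
  rewrite /G; apply: (is_derive_sum E (fun j x => c j * g j x)) => j.
  rewrite /g.
  apply: is_derive_scal.
  apply: is_derive_minus; first apply: is_derive_minus.
  - exact: S_derive.
  - apply: (is_derive_ext (fun x => Sfun (lam j - mu) x * / 2)) => //.
    apply: is_derive_scal_l; exact: S_derive.
  - apply: (is_derive_ext (fun x => Sfun (lam j + mu) x * / 2)) => //.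
    apply: is_derive_scal_l; exact: S_derive.
have G0 : G 0 = 0.
  rewrite /G (@rsum_ext _ E _ (fun _ => 0)); first exact: rsum0.
  move=> j; rewrite /g /= !S0; lra.
set T := 2 * (rsum E (fun j => c j * K j) + 1) / c j0.
have sK : 0 <= rsum E (fun j => c j * K j).
  apply: rsum_ge0 => j; have := K0 j; have := c0 j; nra.
have T0 : 0 < T.
  rewrite /T; apply: Rdiv_lt_0_compat => //; lra.
have GT : G T <= -1.
  have := Gb T (Rlt_le _ _ T0).
  have -> : c j0 * T / 2 = rsum E (fun j => c j * K j) + 1.
    rewrite /T; field; lra.
  lra.
have [xi [Hxi HG]] := MVT_gen G 0 T (fun t => f t * (1 - cos (mu * t))) (fun x _ => Gd x) (fun x _ => cont_of_derive Gd x).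
move: Hxi HG; rewrite Rmin_left ?Rmax_right; try lra.
move=> [xi0 xiT] HG.
have : 0 <= f xi * (1 - cos (mu * xi)).
  apply: Rmult_le_pos; first exact: Hpos.
  have := COS_bound (mu * xi); lra.
move=> Hp.
have : 0 <= G T - G 0 by rewrite HG; apply: Rmult_le_pos; lra.
rewrite G0; lra.
Qed.


Module Spec.
Import complex.
Local Open Scope ring_scope.

Lemma map_mxX (aR rR : pzRingType) (f : {rmorphism aR -> rR}) n (A : 'M[aR]_n) k :
  map_mx f (A ^+ k) = (map_mx f A) ^+ k.
Proof.
elim: k => [|k IH]; first by rewrite !expr0 map_mx1.
by rewrite !exprS -!mulmxE map_mxM IH.
Qed.

Lemma spectral_data n (A : 'M[R]_n) : A^T = A -> \det A != 0 -> forall u : 'I_n,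
  exists (c lam : 'I_n -> R), (forall j, 0 <= c j) /\ (forall j, lam j != 0) /\
    (forall k, (A ^+ k) u u = \sum_j c j * lam j ^+ k).
Proof.
move=> Asym Adet u.
pose f := real_complex R.
pose Ac := map_mx f A.
have Aherm : Ac \is hermsymmx.
  apply/is_hermitianmxP; rewrite expr0 scale1r.
  apply/matrixP => i j; rewrite !mxE.
  rewrite -{1}Asym mxE.
  by rewrite conj_Creal // complex_real.
have /orthomx_spectralP Aeq := hermitian_normalmx Aherm.
set P := spectralmx Ac in Aeq.
set d := spectral_diag Ac in Aeq.
have Pu : P \in unitmx := spectral_unit Ac.
have dreal : d \is a realmx := hermitian_spectral_diag_real Aherm.
have Acp : forall k, Ac ^+ k = invmx P *m diag_mx (\row_j (d 0 j ^+ k)) *m P.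
  elim=> [|k IH].
    rewrite expr0.
    have -> : diag_mx (\row_j (d 0 j ^+ 0)) = 1%:M.
      by apply/matrixP => i j; rewrite !mxE expr0.
    by rewrite mulmx1 mulVmx.
  rewrite exprS IH {1}Aeq -!mulmxE.
  rewrite !mulmxA -[invmx P *m diag_mx d *m P *m invmx P]mulmxA mulmxV // mulmx1.
  rewrite -[invmx P *m diag_mx d *m _]mulmxA mulmx_diag.
  congr (_ *m diag_mx _ *m _); apply/rowP => j; rewrite !mxE exprS //.
have dR : forall j, d 0 j \is Num.real by move=> j; exact: (mxOverP dreal).
have nR : forall j, `|P j u| ^+ 2 \is Num.real by move=> j; rewrite rpredX // normr_real.
exists (fun j => complex.Re (`|P j u| ^+ 2)), (fun j => complex.Re (d 0 j)).
split; [|split].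
- move=> j; rewrite -ler0c RRe_real //; exact: exprn_ge0.
- move=> j; apply/negP => /eqP H0.
  have dj0 : d 0 j = 0 by rewrite -(RRe_real (dR j)) H0.
  have : \det Ac = 0.
    rewrite Aeq !det_mulmx det_diag (bigD1 j) //= dj0 mul0r.
    by rewrite mulr0 mul0r.
  rewrite det_map_mx => /eqP; rewrite -(rmorph0 f) => /eqP /complexI H1.
  by move: Adet; rewrite H1 eqxx.
- move=> k; apply: complexI.
  rewrite [LHS](_ : _ = (Ac ^+ k) u u); last by rewrite -map_mxX mxE.
  rewrite Acp invmx_unitary ?spectral_unitarymx // mul_mx_diag !mxE rmorph_sum.
  apply: eq_bigr => j _; rewrite !mxE mulrAC -normCKC -{1}(RRe_real (dR j)) -{1}(RRe_real (nR j)).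
  by rewrite rmorphM rmorphXn.
Qed.
End Spec.


Lemma ac4 (a b p q r : R) :
  Rmult (Rmult (Rmult (Rmult a b) p) q) (Rmult r r) =
  Rmult (Rmult (Rmult a p) r) (Rmult (Rmult b r) q).
Proof. ring. Qed.

Section Bip.
Local Open Scope ring_scope.

Lemma bip_odd n (e : rel 'I_n) (w : 'I_n -> 'I_n -> R) (col : 'I_n -> bool) :
  (forall x y, e x y -> col x != col y) ->
  forall k u, odd k -> ((wadj e w) ^+ k) u u = 0.
Proof.
move=> Hc.
set A := wadj e w.
pose s := fun i => if col i then 1 else -1 : R.
have s2 : forall z, s z * s z = 1.
  by move=> z; rewrite /s; case: (col z); rewrite ?mulr1 ?mulrNN ?mulr1.
have Hedge : forall z y, A z y * s z * s y = - A z y.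
  move=> z y; rewrite /A /wadj mxE.
  case E: (e z y); last by rewrite !mul0r oppr0.
  move: (Hc _ _ E); rewrite /s.
  by case: (col z); case: (col y) => //= _; rewrite ?mulr1 ?mulrN1.
have Hk : forall k x y, (A ^+ k) x y * s x * s y = (-1) ^+ k * (A ^+ k) x y.
  elim=> [|k IH] x y.
    rewrite !expr0 mul1r !mxE.
    case: (eqVneq x y) => [->|nxy].
      by rewrite -mulrA s2 mulr1.
    by rewrite !mul0r.
  rewrite exprSr -mulmxE mxE !mulr_suml mulr_sumr.
  apply: eq_bigr => z _.
  have E1 : (A ^+ k) x z * A z y * s x * s y =
            ((A ^+ k) x z * s x * s z) * (A z y * s z * s y).
    rewrite -[LHS]mulr1 -(s2 z); exact: ac4.
  rewrite E1 IH Hedge exprSr.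
  by rewrite mulrN mulrN1 -!mulrA mulNr.
move=> k u ko.
have := Hk k u u; rewrite -mulrA s2 mulr1 -signr_odd ko expr1 mulN1r => /eqP.
by rewrite -subr_eq0 opprK -mulr2n mulrn_eq0 /= => /eqP.
Qed.
End Bip.


Section Det.
Local Open Scope ring_scope.

Variables (n : nat) (e : rel 'I_n) (M : {set {set 'I_n}}).
Hypothesis esymm : symmetric e.
Hypothesis eirr : irreflexive e.
Hypothesis HM : perfect_matching e M.
Hypothesis Huniq : forall M', perfect_matching e M' -> M' = M.

Lemma uniq_in_M v y y' : [set v; y] \in M -> [set v; y'] \in M -> y != v -> y = y'.
Proof.
move=> H1 H2 yv.
have := (HM.2 v) => /eqP/cards1P [S0 HS0].
have : [set v; y] \in [set S in M | v \in S] by rewrite inE H1 set21.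
have : [set v; y'] \in [set S in M | v \in S] by rewrite inE H2 set21.
rewrite HS0 !inE => /eqP E1 /eqP E2.
have E : [set v; y] = [set v; y'] by rewrite E1 E2.
have : y \in [set v; y'] by rewrite -E set22.
by case/set2P => // yv'; move: yv; rewrite yv' eqxx.
Qed.

Lemma partner_ex v : exists y, e v y && ([set v; y] \in M).
Proof.
have := (HM.2 v) => /eqP/cards1P [S0 HS0].
have : S0 \in [set S in M | v \in S] by rewrite HS0 set11.
rewrite inE => /andP [S0M vS0].
have [x [y [exy S0E]]] := HM.1 S0 S0M.
move: vS0; rewrite S0E => /set2P [vx|vy].
  by subst x; exists y; rewrite exy -S0E S0M.
subst y; exists x; rewrite esymm exy /=.
by rewrite setUC -S0E.
Qed.

Definition partner v : 'I_n := odflt v [pick y | e v y && ([set v; y] \in M)].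

Lemma partnerP v : e v (partner v) && ([set v; partner v] \in M).
Proof.
rewrite /partner; case: pickP => [y //|H].
have [y Hy] := partner_ex v; by move: (H y); rewrite Hy.
Qed.

Lemma partnerK : involutive partner.
Proof.
move=> v.
have /andP [e1 M1] := partnerP v.
have /andP [e2 M2] := partnerP (partner v).
have M1' : [set partner v; v] \in M by rewrite setUC.
apply: esym; apply: (uniq_in_M _ _ _ M1' M2).
by apply/eqP => H; move: e1; rewrite -H eirr.
Qed.

Lemma edge_perm_M (col : 'I_n -> bool) (s : {perm 'I_n}) :
  (forall x y, e x y -> col x != col y) -> (forall i, e i (s i)) ->
  forall v, col v -> [set v; s v] \in M.
Proof.
move=> Hc Hs v cv.
pose M1 := (fun i => [set i; s i]) @: [set i | col i].
have PM1 : perfect_matching e M1.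
  split.
    move=> S /imsetP [i _ ->]; exists i, (s i); split => //.
  move=> u; apply/eqP/cards1P.
  exists (if col u then [set u; s u] else [set (s^-1)%g u; u]).
  apply/setP => S; rewrite !inE; apply/andP/eqP.
    case=> /imsetP [i]; rewrite inE => ci -> /set2P [ui|ui].
      by subst u; rewrite ci.
    have : col u = false.
      by move: (Hc _ _ (Hs i)); rewrite -ui ci; case: (col u).
    by move=> ->; rewrite ui permK.
  case: ifP => cu ->.
    by split; [apply: imset_f; rewrite inE | rewrite set21].
  split; last by rewrite set22.
  have E : [set (s^-1)%g u; u] = [set (s^-1)%g u; s ((s^-1)%g u)] by rewrite permKV.
  rewrite E; apply: imset_f; rewrite inE.
  move: (Hc _ _ (Hs ((s^-1)%g u))); rewrite permKV cu.
  by case: (col _).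
rewrite -(Huniq _ PM1); apply: imset_f; by rewrite inE.
Qed.

Lemma edge_perm_eq (col : 'I_n -> bool) (s : {perm 'I_n}) :
  (forall x y, e x y -> col x != col y) -> (forall i, e i (s i)) ->
  forall v, s v = partner v.
Proof.
move=> Hc Hs v.
have HM1 : [set v; s v] \in M.
  case cv: (col v); first exact: (edge_perm_M _ _ Hc Hs).
  apply: (edge_perm_M (fun x => ~~ col x) s) => //; last by rewrite cv.
  by move=> x y /Hc; case: (col x); case: (col y).
have /andP [_ HM2] := partnerP v.
apply: (uniq_in_M _ _ _ HM1 HM2).
by apply/eqP => H; move: (Hs v); rewrite H eirr.
Qed.

End Det.

Section Det2.
Local Open Scope ring_scope.

Lemma det_ne0 n (e : rel 'I_n) (w : 'I_n -> 'I_n -> R) :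
  simple_graph e -> bipartite e -> unique_perfect_matching e ->
  (forall x y, e x y -> w x y <> 0) -> \det (wadj e w) != 0.
Proof.
move=> [esymm eirr] [col Hc] [M [HM Huniq]] wne.
pose p := partner _ e M.
have pK : involutive p := partnerK _ _ _ esymm eirr HM.
pose s0 := perm (can_inj pK).
have s0E : forall i, s0 i = p i by move=> i; rewrite permE.
rewrite /determinant (bigD1 s0) //= [X in _ + X]big1 ?addr0.
  apply: mulf_neq0; first by rewrite signr_eq0.
  apply/prodf_neq0 => i _; rewrite /wadj mxE s0E.
  have /andP [ep _] := partnerP _ _ _ esymm HM i.
  rewrite ep; apply/eqP; exact: wne.
move=> s sne.
case: (boolP [forall i, e i (s i)]) => [/forallP Hs | /forallPn [i Hi]].
  exfalso; move/eqP: sne; apply; apply/permP => v.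
  rewrite s0E; exact: (edge_perm_eq _ _ _ esymm eirr HM Huniq col s Hc Hs).
by rewrite (bigD1 i) //= /wadj mxE (negPf Hi) mul0r mulr0.
Qed.
End Det2.


Lemma powz t k : pow_n (Cmult Ci (RtoC t)) k =
  if odd k then (0, (-1) ^ (k./2) * t ^ k) else ((-1) ^ (k./2) * t ^ k, 0).
Proof.
elim: k => [|k IH].
  by rewrite /= /one /=; apply: injective_projections => /=; ring.
rewrite /= IH /mult /= uphalf_half.
case Ok: (odd k) => /=; rewrite ?add1n ?add0n /=; apply: injective_projections => /=; ring.
Qed.

Lemma term_im n (A : 'M[R]_n) t u k : (odd k -> GRing.exp A k u u = 0) ->
  Complex.Im (expitA_term A t u u k) = 0.
Proof.
move=> Hodd; rewrite /expitA_term powz.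
case Ok: (odd k) => /=.
  rewrite (Hodd Ok) /Rdiv; ring.
ring.
Qed.

Lemma term_re n (A : 'M[R]_n) t u k (c lam : 'I_n -> R) :
  GRing.exp A k u u = rsum (index_enum 'I_n) (fun j => c j * GRing.exp (lam j) k) ->
  Complex.Re (expitA_term A t u u k) = rsum (index_enum 'I_n) (fun j => c j * (cc k * (lam j * t) ^ k)).
Proof.
move=> Hk; rewrite /expitA_term powz /cc.
case Ok: (odd k) => /=.
  rewrite (@rsum_ext _ _ _ (fun _ => 0)); first by rewrite rsum0; ring.
  move=> j; ring.
rewrite Hk.
rewrite (@rsum_ext _ _ _ (fun j => c j * lam j ^ k * ((-1) ^ k./2 * t ^ k / INR (Factorial.fact k)))).
  rewrite rsumMr.
  have -> : rsum (index_enum 'I_n) (fun j => c j * GRing.exp (lam j) k) = rsum (index_enum 'I_n) (fun j => c j * lam j ^ k).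
    by apply: rsum_ext => j; rewrite RpowE.
  set X := rsum _ (fun j => c j * lam j ^ k). rewrite /Rdiv. ring.
move=> j; rewrite Rpow_mult_distr; rewrite /Rdiv; ring.
Qed.

Lemma is_series_rsum {I : Type} (s : seq I) (a : I -> nat -> R) (l : I -> R) :
  (forall j, is_series (a j) (l j)) ->
  is_series (fun k => rsum s (fun j => a j k)) (rsum s l).
Proof.
move=> H; elim: s => [|x s IH].
  rewrite /rsum big_nil; apply: (is_series_ext (fun _ => 0)) => [k|]; first by rewrite big_nil.
  exact: is_series_zero.
have := is_series_plus _ _ _ _ (H x) IH.
rewrite /plus /= /rsum big_cons.
by apply: is_series_ext => k; rewrite big_cons.
Qed.

Theorem theorem20 (n : nat) (e : rel 'I_n) :
  simple_graph e -> connected_graph e -> bipartite e ->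
  unique_perfect_matching e ->
  forall w : 'I_n -> 'I_n -> R,
    (forall x y, e x y -> w x y = w y x) ->
    (forall x y, e x y -> w x y <> R0) ->
    forall u : 'I_n, not_sedentary (wadj e w) u.
Proof.
move=> Hsg Hconn Hbip Hupm w wsym wne u.
have Adet := det_ne0 _ _ _ Hsg Hbip Hupm wne.
have [esymm eirr] := Hsg.
have [col Hc] := Hbip.
set A := wadj e w in Adet *.
have Atr : trmx A = A.
  apply/matrixP => x y; rewrite !mxE esymm.
  case E: (e x y) => //; apply: wsym; by rewrite esymm.
have [c [lam [c0 [lam0 Hk]]]] := @Spec.spectral_data _ A Atr Adet u.
have Hodd := bip_odd n e w col Hc.
have Hk' : forall k, GRing.exp A k u u = rsum (index_enum 'I_n) (fun j => c j * GRing.exp (lam j) k).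
  move=> k; exact: Hk.
have c1 : rsum (index_enum 'I_n) c = 1.
  have := Hk' O; rewrite /= mxE eqxx /= => H.
  rewrite (@rsum_ext _ _ _ (fun j => c j * GRing.exp (lam j) 0)); first by rewrite -H.
  by move=> j; rewrite /= RmultE GRing.mulr1.
have c0' : forall j, 0 <= c j by move=> j; apply/RleP.
have lam0' : forall j, lam j <> 0 by move=> j; apply/eqP.
have [t0 [t0pos Hz]] := zero_exists _ c lam c0' lam0' c1.
have Htr : transition A t0 u u = (0, 0).
  rewrite /transition; f_equal.
    apply: is_series_unique; rewrite -Hz.
    apply: (is_series_ext (fun k => rsum (index_enum 'I_n) (fun j => c j * (cc k * (lam j * t0) ^ k)))).
      by move=> k; rewrite (term_re _ _ _ _ _ _ _ (Hk' k)).
    apply: is_series_rsum => j.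
    have := is_series_scal (c j) _ _ (cos_series (lam j * t0)).
    by rewrite /scal /= /mult /=.
  apply: is_series_unique.
  apply: (is_series_ext (fun _ => 0)); last exact: is_series_zero.
  move=> k; rewrite term_im //; exact: (Hodd k u).
apply: is_glb_Rbar_unique; split.
  move=> x [t [_ ->]] /=; exact: Cmod_ge_0.
move=> b Hb; apply: Hb; exists t0; split => //.
rewrite Htr; have := Cmod_0; rewrite /RtoC => ->; reflexivity.
Qed.
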